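(* Let $(\mathcal{P},\cdot)$ be a finite-dimensional admissible Poisson algebra which is not a nilalgebra. Then $\mathcal{P}$ contains a non-zero idempotent $e$, i.e. $e\ne0$ and $e\cdot e=e$.
   Context: $\mathbb{K}$ is a field of characteristic different from $2$ and $3$. Associator: $A(X,Y,Z)=(X\cdot Y)\cdot Z-X\cdot(Y\cdot Z)$. An admissible Poisson algebra is a $\mathbb{K}$-vector space $\mathcal{P}$ with a bilinear product $\cdot$ satisfying $3A(X,Y,Z)=(X\cdot Z)\cdot Y+(Y\cdot Z)\cdot X-(Y\cdot X)\cdot Z-(Z\cdot X)\cdot Y$ for all $X,Y,Z$. Powers: $X^1=X$, $X^{i+1}=X\cdot X^i$. An element $X$ is nilpotent if $X^r=0$ for some $r$; $\mathcal{P}$ is a nilalgebra if every element is nilpotent. *)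

(* Defs.v *)
From HB Require Import structures.
From mathcomp Require Import all_boot all_order all_algebra.
Set Implicit Arguments. Unset Strict Implicit. Unset Printing Implicit Defensive.
Import GRing.Theory.
Local Open Scope ring_scope.

Definition bilinear_prod (K : fieldType) (V : lmodType K) (mul : V -> V -> V) :=
  (forall (a : K) (x y z : V), mul (a *: x + y) z = a *: mul x z + mul y z) /\
  (forall (a : K) (x y z : V), mul x (a *: y + z) = a *: mul x y + mul x z).

Definition assoc (K : fieldType) (V : lmodType K) (mul : V -> V -> V) (x y z : V) :=
  mul (mul x y) z - mul x (mul y z).

Definition admissible_poisson (K : fieldType) (V : lmodType K) (mul : V -> V -> V) :=
  forall x y z : V,
    assoc mul x y z *+ 3 =
      mul (mul x z) y + mul (mul y z) x - mul (mul y x) z - mul (mul z x) y.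

(* Powers: X^1 = X, X^(i+1) = X . X^i.  ppow mul x n = x^(n+1). *)
Fixpoint ppow (K : fieldType) (V : lmodType K) (mul : V -> V -> V) (x : V) (n : nat) : V :=
  match n with
  | 0 => x
  | n'.+1 => mul x (ppow mul x n')
  end.

Definition nilpotent_elt (K : fieldType) (V : lmodType K) (mul : V -> V -> V) (x : V) :=
  exists r : nat, ppow mul x r = 0.

Definition nilalgebra (K : fieldType) (V : lmodType K) (mul : V -> V -> V) :=
  forall x : V, nilpotent_elt mul x.

(* Main.v *)
Require Import Defs.
From HB Require Import structures.
From mathcomp Require Import all_boot all_order all_algebra.
From mathcomp Require Import ring.
From Stdlib Require Import Classical.
Import GRing.Theory.
Local Open Scope ring_scope.

Inductive ex := At of nat | Add of ex & ex | Opp of ex | Zero | Mn of ex & nat.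

Section Refl.
Variable V : zmodType.
Variable env : seq V.
Fixpoint eval (e : ex) : V :=
  match e with
  | At i => nth 0 env i
  | Add a b => eval a + eval b
  | Opp a => - eval a
  | Zero => 0
  | Mn a n => eval a *+ n
  end.
Fixpoint vadd (s t : seq int) : seq int :=
  match s, t with
  | [::], t => t
  | s, [::] => s
  | a :: s', b :: t' => (a + b) :: vadd s' t'
  end.
Fixpoint norm (e : ex) : seq int :=
  match e with
  | At i => rcons (nseq i 0) 1
  | Add a b => vadd (norm a) (norm b)
  | Opp a => map (fun c => - c) (norm a)
  | Zero => [::]
  | Mn a n => map (fun c => c *+ n) (norm a)
  end.
Fixpoint den (k : nat) (s : seq int) : V :=
  match s with
  | [::] => 0
  | c :: s' => nth 0 env k *~ c + den k.+1 s'
  end.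
Lemma den_vadd s t k : den k (vadd s t) = den k s + den k t.
Proof.
elim: s t k => [|a s IH] [|b t] k /=; rewrite ?add0r ?addr0 //.
by rewrite IH mulrzDr addrACA.
Qed.
Lemma den_opp s k : den k (map (fun c => - c) s) = - den k s.
Proof. by elim: s k => [|a s IH] k /=; rewrite ?oppr0 // IH mulrNz opprD. Qed.
Lemma den_mn s n k : den k (map (fun c => c *+ n) s) = den k s *+ n.
Proof.
elim: s k => [|a s IH] k /=; rewrite ?mul0rn // IH mulrnDl.
congr (_ + _); clear IH; elim: n => [|n IHn]; first by rewrite !mulr0n mulr0z.
by rewrite !mulrS mulrzDr IHn.
Qed.
Lemma den_at i k : den k (rcons (nseq i 0) 1) = nth 0 env (k + i).
Proof.
elim: i k => [|i IH] k /=; first by rewrite addn0 addr0.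
by rewrite mulr0z add0r IH addSnnS.
Qed.
Lemma den_norm e : den 0 (norm e) = eval e.
Proof.
elim: e => [i|a IHa b IHb|a IHa||a IHa n] /=.
- by rewrite den_at.
- by rewrite den_vadd IHa IHb.
- by rewrite den_opp IHa.
- by [].
- by rewrite den_mn IHa.
Qed.
Lemma den_zero s k : all (fun c => c == 0) s -> den k s = 0.
Proof.
elim: s k => [|a s IH] k //= /andP[/eqP -> H]; by rewrite mulr0z add0r IH.
Qed.
Lemma combo e1 e2 :
  all (fun c => c == 0) (vadd (norm e1) (map (fun c => - c) (norm e2))) ->
  eval e1 = eval e2.
Proof.
move=> H; apply/eqP; rewrite -subr_eq0 -den_norm -(den_norm e2) -den_opp -den_vadd.
by rewrite den_zero.
Qed.
End Refl.

Set Implicit Arguments. Unset Strict Implicit.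

Ltac mem x l := lazymatch l with
  | nil => constr:(false)
  | cons x _ => constr:(true)
  | cons _ ?l' => mem x l' end.
Ltac lookup x l := lazymatch l with
  | cons x _ => constr:(0%N)
  | cons _ ?l' => let n := lookup x l' in constr:(S n) end.
Ltac collect t acc := lazymatch t with
  | ?a + ?b => let acc := collect a acc in collect b acc
  | - ?a => collect a acc
  | 0 => acc
  | ?a *+ _ => collect a acc
  | _ => let b := mem t acc in
         lazymatch b with true => acc | false => constr:(t :: acc) end end.
Ltac reify env t := lazymatch t with
  | ?a + ?b => let ra := reify env a in let rb := reify env b in constr:(Add ra rb)
  | - ?a => let ra := reify env a in constr:(Opp ra)
  | 0 => constr:(Zero)
  | ?a *+ ?n => let ra := reify env a in constr:(Mn ra n)
  | _ => let i := lookup t env in constr:(At i) end.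
Ltac lincomb := lazymatch goal with |- ?l = ?r =>
  let T := type of l in
  let env := collect l (@nil T) in let env := collect r env in
  let el := reify env l in let er := reify env r in
  change (eval _ env el = eval _ env er); apply: combo; exact (erefl true) end.

Section Bil.
Variables (K : fieldType) (V : lmodType K) (mul : V -> V -> V).
Hypothesis Hb : bilinear_prod mul.
Hypothesis Ha : admissible_poisson mul.

Lemma bmul0l z : mul 0 z = 0.
Proof. have := (proj1 Hb) 1 0 0 z; rewrite !scale1r addr0 => h. by apply: (addrI (mul 0 z)); rewrite addr0 -h. Qed.
Lemma bmul0r z : mul z 0 = 0.
Proof. have := (proj2 Hb) 1 z 0 0; rewrite !scale1r addr0 => h. by apply: (addrI (mul z 0)); rewrite addr0 -h. Qed.
Lemma bmulDl x y z : mul (x + y) z = mul x z + mul y z.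
Proof. by have := (proj1 Hb) 1 x y z; rewrite !scale1r. Qed.
Lemma bmulDr x y z : mul z (x + y) = mul z x + mul z y.
Proof. by have := (proj2 Hb) 1 z x y; rewrite !scale1r. Qed.
Lemma bmulZl a x z : mul (a *: x) z = a *: mul x z.
Proof. by have := (proj1 Hb) a x 0 z; rewrite !addr0 bmul0l addr0. Qed.
Lemma bmulZr a x z : mul z (a *: x) = a *: mul z x.
Proof. by have := (proj2 Hb) a z x 0; rewrite !addr0 bmul0r addr0. Qed.
Lemma bmulNl x z : mul (- x) z = - mul x z.
Proof. by rewrite -scaleN1r bmulZl scaleN1r. Qed.
Lemma bmulNr x z : mul z (- x) = - mul z x.
Proof. by rewrite -scaleN1r bmulZr scaleN1r. Qed.
Lemma bmulnl x z n : mul (x *+ n) z = mul x z *+ n.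
Proof. by rewrite -!scaler_nat bmulZl. Qed.
Lemma bmulnr x z n : mul z (x *+ n) = mul z x *+ n.
Proof. by rewrite -!scaler_nat bmulZr. Qed.

Definition Dadm x y z := assoc mul x y z *+ 3 -
  (mul (mul x z) y + mul (mul y z) x - mul (mul y x) z - mul (mul z x) y).
Lemma DadmE x y z : Dadm x y z = 0.
Proof. by rewrite /Dadm Ha subrr. Qed.

Definition cc x y := mul x y + mul y x.
Definition bb x y := mul x y - mul y x.

Hypothesis H3 : (3%:R : K) != 0.
Lemma cancel3 (X : V) : X *+ 3 = 0 -> X = 0.
Proof. by rewrite -scaler_nat => /eqP; rewrite scaler_eq0 (negbTE H3) => /eqP. Qed.

Lemma ccA u v w : cc (cc u v) w = cc u (cc v w).
Proof.
apply/eqP; rewrite -subr_eq0; apply/eqP/cancel3.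
have E : (cc (cc u v) w - cc u (cc v w)) *+ 3 =
   Dadm u v w + Dadm u w v - Dadm w u v - Dadm w v u.
  by rewrite /cc /Dadm /assoc !(bmulDl, bmulDr); lincomb.
by rewrite E !DadmE !(addr0, subr0, oppr0).
Qed.

Lemma leib u v w : bb u (cc v w) = cc (bb u v) w + cc v (bb u w).
Proof.
apply/eqP; rewrite -subr_eq0; apply/eqP/cancel3.
have E : (bb u (cc v w) - (cc (bb u v) w + cc v (bb u w))) *+ 3 =
   - Dadm u v w - Dadm u w v + Dadm v u w - Dadm v w u + Dadm w u v - Dadm w v u.
  by rewrite /bb /cc /Dadm /assoc !(bmulDl, bmulDr, bmulNl, bmulNr); lincomb.
by rewrite E !DadmE !(addr0, subr0, oppr0).
Qed.
End Bil.

Section PA.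
Variables (K : fieldType) (V : lmodType K) (mul : V -> V -> V).
Hypothesis Hb : bilinear_prod mul.
Hypothesis Ha : admissible_poisson mul.
Hypothesis H2 : (2%:R : K) != 0.
Hypothesis H3 : (3%:R : K) != 0.
Variable x : V.

Fixpoint Q n := if n is n'.+1 then cc mul x (Q n') else x.

Lemma cc0l a : cc mul 0 a = 0.
Proof. by rewrite /cc (bmul0l Hb) (bmul0r Hb) addr0. Qed.
Lemma cc0r a : cc mul a 0 = 0.
Proof. by rewrite /cc (bmul0l Hb) (bmul0r Hb) addr0. Qed.

Lemma bbxQ n : bb mul x (Q n) = 0.
Proof.
elim: n => [|n IH] /=; first by rewrite /bb subrr.
by rewrite leib // /bb subrr -/(bb mul x (Q n)) IH cc0l cc0r addr0.
Qed.

Lemma QE n : Q n = ppow mul x n *+ 2 ^ n.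
Proof.
elim: n => [|n IH] //=.
have -> : cc mul x (Q n) = mul x (Q n) *+ 2 - bb mul x (Q n) by rewrite /cc /bb; lincomb.
by rewrite bbxQ subr0 IH bmulnr // -mulrnA expnS mulnC.
Qed.

Lemma ccQ i j : cc mul (Q i) (Q j) = Q (i + j).+1.
Proof.
elim: i => [|i IH] //=.
by rewrite ccA // IH.
Qed.

Lemma bbQ i j : bb mul (Q i) (Q j) = 0.
Proof.
elim: j => [|j IH] /=.
  have -> : bb mul (Q i) x = - bb mul x (Q i) by rewrite /bb; lincomb.
  by rewrite bbxQ oppr0.
rewrite leib //.
have -> : bb mul (Q i) x = - bb mul x (Q i) by rewrite /bb; lincomb.
by rewrite IH bbxQ oppr0 cc0l cc0r addr0.
Qed.

Lemma ppow_mul i j : mul (ppow mul x i) (ppow mul x j) = ppow mul x (i + j).+1.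
Proof.
have E : mul (Q i) (Q j) *+ 2 = Q (i + j).+1.
  have -> : mul (Q i) (Q j) *+ 2 = cc mul (Q i) (Q j) + bb mul (Q i) (Q j)
    by rewrite /cc /bb; lincomb.
  by rewrite bbQ addr0 ccQ.
move: E; rewrite !QE bmulnl // bmulnr // -!mulrnA -!scaler_nat => E.
apply: (scalerI (a := (2 ^ (i + j).+1)%:R)).
  by rewrite natrX expf_neq0.
rewrite -E expnS expnD; congr ((_ %:R) *: _); by rewrite [RHS]mulnC [(2 ^ i * 2)%N]mulnC -mulnA.
Qed.
End PA.

Section Psi.
Variables (K : fieldType) (V : lmodType K) (mul : V -> V -> V).
Hypothesis Hb : bilinear_prod mul.
Variable x : V.
Hypothesis hpa : forall i j, mul (ppow mul x i) (ppow mul x j) = ppow mul x (i + j).+1.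

Local Notation pw := (ppow mul x).
Definition psi (p : {poly K}) : V := \sum_(i < size p) p`_i *: pw i.

Lemma psiE n (p : {poly K}) : (size p <= n)%N -> psi p = \sum_(i < n) p`_i *: pw i.
Proof.
move=> le; rewrite /psi (big_ord_widen n (fun i => p`_i *: pw i)) // big_mkcond.
apply: eq_bigr => i _; case: ltnP => // h.
by rewrite nth_default // scale0r.
Qed.

Lemma psi0 : psi 0 = 0.
Proof. by rewrite /psi size_poly0 big_ord0. Qed.

Lemma psiL a (p q : {poly K}) : psi (a *: p + q) = a *: psi p + psi q.
Proof.
set n := maxn (size p) (size q).
have hp : (size p <= n)%N by rewrite leq_maxl.
have hq : (size q <= n)%N by rewrite leq_maxr.
have hpq : (size (a *: p + q)%R <= n)%N.
  apply: leq_trans (size_polyD _ _) _; rewrite geq_max hq andbT.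
  exact: leq_trans (size_scale_leq _ _) hp.
rewrite (psiE hpq) (psiE hp) (psiE hq) scaler_sumr -big_split /=.
by apply: eq_bigr => i _; rewrite coefD coefZ scalerDl scalerA.
Qed.

Lemma psiD (p q : {poly K}) : psi (p + q) = psi p + psi q.
Proof. by have := psiL 1 p q; rewrite !scale1r. Qed.
Lemma psiZ a (p : {poly K}) : psi (a *: p) = a *: psi p.
Proof. by have := psiL a p 0; rewrite !addr0 psi0 addr0. Qed.
Lemma psiN (p : {poly K}) : psi (- p) = - psi p.
Proof. by rewrite -(scaleN1r p) psiZ scaleN1r. Qed.
Lemma psiB (p q : {poly K}) : psi (p - q) = psi p - psi q.
Proof. by rewrite psiD psiN. Qed.
Lemma psi_sum n (F : 'I_n -> {poly K}) : psi (\sum_(i < n) F i) = \sum_(i < n) psi (F i).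
Proof. exact: (big_morph psi psiD psi0). Qed.

Lemma mul_sumr a n (c : nat -> K) (v : nat -> V) :
  mul a (\sum_(j < n) c j *: v j) = \sum_(j < n) c j *: mul a (v j).
Proof.
rewrite (big_morph (mul a) (fun u w => bmulDr Hb u w a) (bmul0r Hb a)).
by apply: eq_bigr => j _; rewrite bmulZr.
Qed.
Lemma mul_suml a n (c : nat -> K) (v : nat -> V) :
  mul (\sum_(j < n) c j *: v j) a = \sum_(j < n) c j *: mul (v j) a.
Proof.
rewrite (big_morph (mul^~ a) (fun u w => bmulDl Hb u w a) (bmul0l Hb a)).
by apply: eq_bigr => j _; rewrite bmulZl.
Qed.

Lemma psiX (p : {poly K}) : psi ('X * p) = mul x (psi p).
Proof.
have [->|p0] := eqVneq p 0; first by rewrite mulr0 psi0 bmul0r.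
rewrite mulrC /psi size_mulX // big_ord_recl coefMX /= scale0r add0r mul_sumr.
by apply: eq_bigr => i _; rewrite coefMX /bump /= add0n.
Qed.

Lemma psi1 : psi 1 = x.
Proof. by rewrite /psi size_polyC oner_neq0 big_ord1 coef1 scale1r. Qed.

Lemma psiXn m : psi (('X : {poly K}) ^+ m) = pw m.
Proof.
elim: m => [|m IH]; first by rewrite expr0 psi1.
by rewrite exprS psiX IH.
Qed.

Lemma psi_ker (p r : {poly K}) : psi p = 0 -> psi (p * r) = 0.
Proof.
move=> hp; elim/poly_ind: r => [|r c IH]; first by rewrite mulr0 psi0.
rewrite mulrDr mulrA (mulrC _ 'X) psiD psiX IH bmul0r // add0r.
by rewrite mulrC mul_polyC psiZ hp scaler0.
Qed.

Lemma psiXnM i (q : {poly K}) : psi ('X ^+ i.+1 * q) = \sum_(j < size q) q`_j *: pw (i + j).+1.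
Proof.
elim: i => [|i IH].
  rewrite expr1 psiX /psi mul_sumr.
  by apply: eq_bigr => j _; rewrite add0n.
rewrite exprS -mulrA psiX IH (mul_sumr _ _ (fun j => q`_j) (fun j => pw (i + j).+1)).
by apply: eq_bigr => j _.
Qed.

Lemma psiM1 i (q : {poly K}) : mul (pw i) (psi q) = psi ('X ^+ i.+1 * q).
Proof.
rewrite psiXnM /psi mul_sumr.
by apply: eq_bigr => j _; rewrite hpa.
Qed.

Lemma psiM (p q : {poly K}) : mul (psi p) (psi q) = psi ('X * p * q).
Proof.
rewrite {1}/psi mul_suml.
under eq_bigr => i _ do rewrite psiM1.
have Ep : 'X * p * q = \sum_(i < size p) p`_i *: ('X ^+ i.+1 * q).
  rewrite -{1}[p]coefK poly_def mulr_sumr mulr_suml.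
  by apply: eq_bigr => i _; rewrite -scalerAr -scalerAl exprS.
rewrite Ep psi_sum.
by apply: eq_bigr => i _; rewrite psiZ.
Qed.
End Psi.

Theorem mainTheorem4 (K : fieldType) (V : vectType K) (mul : V -> V -> V) :
  ~~ (2%N \in [pchar K]) -> ~~ (3%N \in [pchar K]) ->
  bilinear_prod mul -> admissible_poisson mul -> ~ nilalgebra mul ->
  exists e : V, e != 0 /\ mul e e = e.
Proof.
move=> c2 c3 Hb Ha Hn.
have H2 : (2%:R : K) != 0 by move: c2; rewrite inE.
have H3 : (3%:R : K) != 0 by move: c3; rewrite inE.
have [x Hx] : exists x : V, forall r, ppow mul x r != 0.
  apply: NNPP => hne; apply: Hn => x; apply: NNPP => hx; apply: hne; exists x.
  by move=> r; apply/negP => /eqP hr; apply: hx; exists r.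
have hpa := ppow_mul Hb Ha H2 H3 x.
pose n := \dim (fullv : {vspace V}).
pose X := [tuple ppow mul x i | i < n.+1].
have nfree : ~~ free X.
  apply/negP => /eqP hf.
  have := dimvS (subvf <<X>>%VS); rewrite hf size_tuple -/n.
  by rewrite ltnn.
have [k [hk [i0 hi0]]] : exists k : 'I_n.+1 -> K,
    \sum_(i < n.+1) k i *: X`_i = 0 /\ exists i, k i != 0.
  apply: NNPP => hne; move/freeP: nfree; apply => k hk i.
  apply: NNPP => hki; apply: hne; exists k; split => //; exists i.
  exact/eqP.
pose h := \poly_(i < n.+1) k (inord i).
have psih : psi mul x h = 0.
  rewrite (psiE mul x (size_poly _ _)) -[RHS]hk; apply: eq_bigr => i _.
  by rewrite coef_poly ltn_ord inord_val nth_mktuple.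
have hnz : h != 0.
  apply/eqP => h0; move: hi0; have := coef_poly n.+1 (fun i => k (inord i)) i0.
  by rewrite -/h h0 coef0 ltn_ord inord_val => <-; rewrite eqxx.
have [m [g hg hdec]] := multiplicity_XsubC h 0.
rewrite hnz /= in hg; rewrite polyC0 subr0 in hdec.
have cop : coprimep g ('X ^+ m.+1) by apply: coprimep_expr; rewrite coprimepX.
have [[u1 u2] /= hb] := Bezout_eq1_coprimepP _ _ cop.
pose P := u2 * 'X ^+ m.
have ker r : psi mul x (h * r) = 0.
  have := @psi_ker _ _ mul Hb x h r psih.
  by [].
exists (psi mul x P); split.
  apply/eqP => e0; move/eqP: (Hx m); apply.
  rewrite -(psiXn Hb x m).
  have -> : ('X : {poly K}) ^+ m = h * u1 + P * 'X ^+ m.+1.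
    by rewrite hdec /P -[LHS]mulr1 -hb exprS; ring.
  by rewrite psiD ker (psi_ker Hb _ e0) addr0.
rewrite (psiM Hb hpa); apply/eqP; rewrite -subr_eq0 -psiB //.
have E1 : 'X * P * P - P = P * ('X * P - 1) by ring.
have E2 : 'X * P - 1 = - (u1 * g) by rewrite -hb /P exprS; ring.
rewrite E1 E2.
have -> : P * - (u1 * g) = h * (- (u1 * u2)) by rewrite hdec /P; ring.
by rewrite ker.
Qed.
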